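(* Let $\frac23\le M<\frac34$ and consider Algorithm D on an input whose optimal offline makespan is $1$. If job $j$ is handled by Step 4 and is assigned to $m_1$, then the set $W$ computed in Step 4 satisfies $|W|\le 1$ and $|W|<|Y_{j-1}|$.
   Context: Model (two hierarchical machines with migration, bin stretching). Jobs $1,2,\dots,n$ arrive one by one. Job $j$ has a size $p_j>0$ and a grade of service (GoS) $g_j\in\{1,2\}$; a job of GoS $1$ may only be processed on machine $m_1$, a job of GoS $2$ may be processed on $m_1$ or on $m_2$. When job $j$ arrives, the algorithm must assign it, and may migrate previously arrived jobs (respecting GoS) of total size at most $M\cdot p_j$. The optimal offline makespan of the complete input is known in advance and scaled to $1$. Notation: $Y_{j}$ is the set of jobs on $m_2$ just after job $j$ has been handled, $y_j$ its total size, $y_0=0$; ''sorted $Y_{j-1}$'' lists $Y_{j-1}$ in non-increasing order of size; $w_j$ is the total size of the (current) set $W$. Algorithm D (parameter $M$). On arrival of job $j$: Step 2: if $g_j=1$ or $y_{j-1}\ge M$, assign $j$ to $m_1$. Step 3: else if $y_{j-1}+p_j\le 2-M$, assign $j$ to $m_2$. Step 4: else if $p_j\ge M$: let $W$ be the longest prefix of sorted $Y_{j-1}$ with total size at most $M\cdot p_j$ (possibly empty). If $y_{j-1}-w_j+p_j>2-M$, assign $j$ to $m_1$; otherwise migrate the jobs of $W$ to $m_1$ and assign $j$ to $m_2$. Step 5: else (so $p_j<M$): let $W$ be the shortest prefix of sorted $Y_{j-1}$ with total size at least $M/3$ (or $Y_{j-1}$ if none exists). If $w_j>\min\{2M/3,\,M\cdot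 p_j\}$, replace $W$ by $Y_{j-1}\setminus W$. Then, if $y_{j-1}-w_j+p_j>2-M$, assign $j$ to $m_1$; otherwise migrate the jobs of $W$ to $m_1$ and assign $j$ to $m_2$. *)

(* Defs.v *)
From HB Require Import structures.
From mathcomp Require Import all_boot all_order all_algebra.
Set Implicit Arguments. Unset Strict Implicit. Unset Printing Implicit Defensive.
Import Order.TTheory GRing.Theory Num.Theory.
Local Open Scope ring_scope.

Section AlgD.
Variable R : realFieldType.
(* parameter M, job sizes p and grades of service g (jobs are numbered 1,2,...) *)
Variable M : R.
Variable p : nat -> R.
Variable g : nat -> nat.

Definition tsize (s : seq nat) : R := \sum_(i <- s) p i.

Definition sortY (Y : seq nat) : seq nat := sort (fun a b => p b <= p a) Y.

Definition longest_prefix (b : R) (s : seq nat) : seq nat :=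
  take (\max_(k < (size s).+1 | (tsize (take k s) <= b)%R) (k : nat))%N s.

(* shortest prefix of s with total size at least b, or s itself if none *)
Definition shortest_prefix (b : R) (s : seq nat) : seq nat :=
  take (find (fun k => b <= tsize (take k s)) (iota 0 (size s).+1)) s.

Definition W4 (Y : seq nat) (j : nat) : seq nat :=
  longest_prefix (M * p j) (sortY Y).

Definition W5 (Y : seq nat) (j : nat) : seq nat :=
  let s := sortY Y in
  let W := shortest_prefix (M / 3) s in
  if Num.min (2 * M / 3) (M * p j) < tsize W
  then [seq i <- s | i \notin W] else W.

Definition remove (Y W : seq nat) : seq nat := [seq i <- Y | i \notin W].

(* one step of Algorithm D: new content of m2 after handling job j *)
Definition stepD (Y : seq nat) (j : nat) : seq nat :=
  let y := tsize Y in
  if (g j == 1%N) || (M <= y) then Y                       (* Step 2 *)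
  else if y + p j <= 2 - M then j :: Y                     (* Step 3 *)
  else if M <= p j then                                    (* Step 4 *)
    let W := W4 Y j in
    if 2 - M < y - tsize W + p j then Y else j :: remove Y W
  else                                                     (* Step 5 *)
    let W := W5 Y j in
    if 2 - M < y - tsize W + p j then Y else j :: remove Y W.

(* Y_j : jobs on m2 just after job j has been handled; Y_0 is empty *)
Fixpoint Yset (j : nat) : seq nat :=
  match j with
  | 0 => [::]
  | j'.+1 => stepD (Yset j') j'.+1
  end.

Definition handled_step4 (j : nat) : Prop :=
  let y := tsize (Yset j.-1) in
  [/\ g j != 1%N, y < M, 2 - M < y + p j & M <= p j].

Definition step4_assigned_m1 (j : nat) : Prop :=
  let Y := Yset j.-1 in
  2 - M < tsize Y - tsize (W4 Y j) + p j.

End AlgD.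

(* Offline schedules: a : nat -> bool, a i = true means job i is on m2. *)
Definition valid_assignment (n : nat) (g : nat -> nat) (a : nat -> bool) : Prop :=
  forall i, (1 <= i <= n)%N -> g i = 1%N -> a i = false.

Definition load1 (R : realFieldType) (n : nat) (p : nat -> R) (a : nat -> bool) : R :=
  \sum_(1 <= i < n.+1 | ~~ a i) p i.
Definition load2 (R : realFieldType) (n : nat) (p : nat -> R) (a : nat -> bool) : R :=
  \sum_(1 <= i < n.+1 | a i) p i.

Definition opt_is_one (R : realFieldType) (n : nat) (p : nat -> R) (g : nat -> nat) : Prop :=
  (exists a, valid_assignment n g a /\ Num.max (load1 n p a) (load2 n p a) = 1) /\
  (forall a, valid_assignment n g a -> 1 <= Num.max (load1 n p a) (load2 n p a)).

(* Main.v *)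
Require Import Defs.
From HB Require Import structures.
From mathcomp Require Import all_boot all_order all_algebra.
From mathcomp Require Import lra zify.
Import Order.TTheory GRing.Theory Num.Theory.
Local Open Scope ring_scope.

Lemma Ymem (R : realFieldType) (M : R) p g k i :
  i \in Yset M p g k -> (1 <= i <= k)%N.
Proof.
elim: k i => [|k IH] i //=.
rewrite /stepD.
have H1 : forall Y : seq nat, (forall i, i \in Y -> (1 <= i <= k)%N) ->
  forall i, i \in Y -> (1 <= i <= k.+1)%N.
  move=> Y HY x /HY; lia.
have H2 : forall Y : seq nat, (forall i, i \in Y -> (1 <= i <= k)%N) ->
  forall i, i \in k.+1 :: Y -> (1 <= i <= k.+1)%N.
  move=> Y HY x; rewrite inE => /orP[/eqP->|/HY]; lia.
have H3 : forall W : seq nat, forall i, i \in remove (Yset M p g k) W -> (1 <= i <= k)%N.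
  by move=> W x; rewrite mem_filter => /andP[_ /IH].
move: i.
by repeat case: ifP => _; [ exact: (H1 _ IH) | exact: (H2 _ IH) | exact: (H1 _ IH) | exact: (H2 _ (H3 _)) | exact: (H1 _ IH) | exact: (H2 _ (H3 _))].
Qed.

Lemma sum_ge_one (R : realFieldType) (n : nat) (p : nat -> R) (P : pred nat) j :
  (forall i, (1 <= i <= n)%N -> 0 < p i) -> (1 <= j <= n)%N -> P j ->
  p j <= \sum_(1 <= i < n.+1 | P i) p i.
Proof.
move=> hp hj Pj.
rewrite -big_filter (bigD1_seq j) /=; last first.
- by rewrite filter_uniq // iota_uniq.
- by rewrite mem_filter Pj mem_index_iota ltnS.
rewrite lerDl big_seq_cond sumr_ge0 // => i /andP[]; rewrite mem_filter mem_index_iota ltnS.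
by move=> /andP[_ /hp /ltW].
Qed.

Lemma pj_le1 (R : realFieldType) (n : nat) (p : nat -> R) g j :
  (forall i, (1 <= i <= n)%N -> 0 < p i) -> opt_is_one n p g -> (1 <= j <= n)%N ->
  p j <= 1.
Proof.
move=> hp [[a [_ ha]] _] hj.
rewrite -ha /load1 /load2.
case aj: (a j).
- rewrite le_max; apply/orP; right; apply: sum_ge_one => //.
- rewrite le_max; apply/orP; left; apply: sum_ge_one => //; by rewrite aj.
Qed.

Lemma tsize_rcons (R : realFieldType) (p : nat -> R) l a :
  Defs.tsize p (rcons l a) = Defs.tsize p l + p a.
Proof. by rewrite /Defs.tsize -cats1 big_cat big_seq1. Qed.

Lemma lp_next (R : realFieldType) (p : nat -> R) (b : R) (s : seq nat) :
  let K := (\max_(k < (size s).+1 | (Defs.tsize p (take k s) <= b)%R) (k : nat))%N in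
  (K < size s)%N -> b < Defs.tsize p (take K.+1 s).
Proof.
move=> K HK; rewrite ltNge; apply/negP => H.
have := @leq_bigmax_cond _ (fun k : 'I_(size s).+1 => (Defs.tsize p (take k s) <= b)%R) (fun k => k : nat) (Ordinal (HK : (K.+1 < (size s).+1)%N)) H.
by rewrite -/K /= ltnn.
Qed.

Lemma lp_two (R : realFieldType) (p : nat -> R) (s : seq nat) :
  sorted (fun a b => p b <= p a) s -> (forall i, i \in s -> 0 < p i) ->
  forall K, (2 <= K < size s)%N -> 2 * p (nth 0%N s K) <= Defs.tsize p (take K s).
Proof.
move=> so pos K /andP[K2 Ks].
set x := nth 0%N s K.
have tr : transitive (fun a b => p b <= p a).
  by move=> y x1 z /= h1 h2; exact: le_trans h2 h1.
have Hge : forall i, (i < K)%N -> p x <= p (nth 0%N s i).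
  move=> i iK; apply: (sorted_ltn_nth tr 0%N so) => //; rewrite inE; lia.
have Hpos : forall i, (i < size s)%N -> 0 <= p (nth 0%N s i).
  by move=> i iS; apply/ltW/pos/mem_nth.
suff: forall k, (2 <= k <= K)%N -> 2 * p x <= Defs.tsize p (take k s).
  by apply; rewrite K2 leqnn.
elim=> [|k IH] Hk; first lia.
have ks : (k < size s)%N by lia.
rewrite (take_nth 0%N ks) tsize_rcons.
case: (ltnP 2 k.+1) => H.
- have := IH ltac:(lia); have := Hpos k ks; lra.
- have k1 : k = 1%N by lia.
  subst k.
  rewrite (take_nth 0%N (ltnW ks)) take0 !tsize_rcons /Defs.tsize big_nil.
  have := Hge 0%N ltac:(lia); have := Hge 1%N ltac:(lia); lra.
Qed.

Theorem mainTheorem14 (R : realFieldType) (M : R) (n : nat)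
    (p : nat -> R) (g : nat -> nat)
    (hM1 : 2 / 3 <= M) (hM2 : M < 3 / 4)
    (hp : forall i, (1 <= i <= n)%N -> 0 < p i)
    (hg : forall i, (1 <= i <= n)%N -> g i = 1%N \/ g i = 2%N)
    (hopt : opt_is_one n p g)
    (j : nat) (hj : (1 <= j <= n)%N)
    (h4 : handled_step4 M p g j)
    (hm1 : step4_assigned_m1 M p g j) :
  (size (W4 M p (Yset M p g j.-1) j) <= 1)%N /\
  (size (W4 M p (Yset M p g j.-1) j) < size (Yset M p g j.-1))%N.
Proof.
have pj1 := @pj_le1 R n p g j hp hopt hj.
have pj0 := hp j hj.
move: h4 hm1; rewrite /handled_step4 /step4_assigned_m1.
set Y := Yset M p g j.-1.
move=> [_ hy hyp hpM] hm.
have Ypos : forall i, i \in Y -> 0 < p i.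
  move=> i /Ymem Hi; apply: hp; lia.
set s := sortY p Y.
have tsY : Defs.tsize p s = Defs.tsize p Y.
  by rewrite /Defs.tsize /s /sortY (perm_big _ (permEl (perm_sort _ _))).
have sS : size s = size Y by rewrite /s /sortY size_sort.
have so : sorted (fun a b => p b <= p a) s.
  apply: sort_sorted => a b; exact: le_total.
have spos : forall i, i \in s -> 0 < p i.
  by move=> i; rewrite /s /sortY mem_sort; apply: Ypos.
move: hm; rewrite /W4 /longest_prefix -/s.
set K := (\max_(k < (size s).+1 | _) _)%N => hm.
have Klt : (K < size s)%N.
  rewrite ltnNge; apply/negP => Hge.
  move: hm; rewrite take_oversize // tsY; lra.
rewrite size_takel ?(ltnW Klt) // -sS; split => //.
rewrite leqNgt; apply/negP => K2.
have h1 := @lp_next R p (M * p j) s Klt.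
have h2 := @lp_two R p s so spos K ltac:(lia).
move: h1; rewrite (take_nth 0%N Klt) tsize_rcons => h1.
set w := Defs.tsize p (take K s) in hm h1 h2.
set x := p (nth 0%N s K) in h1 h2.
set y := Defs.tsize p Y in hy hyp hm.
have hh : 0 <= (1 - p j) * (1 - 2 * M / 3) by apply: mulr_ge0; lra.
nra.
Qed.
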